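(* Let $(M,g)$ be a four-dimensional globally hyperbolic analytic spacetime with metric of signature $(+,-,-,-)$, identified via an isometry-compatible diffeomorphism with $\mathbb{R}\times\Sigma$ so that $g=\beta\,dt^2-g_t$, where $\beta>0$ and each $g_t$ is a Riemannian metric on $\Sigma$. For $\varepsilon>0$ let $$g^\varepsilon \doteq (1-i\varepsilon)\,\beta\,dt^2-g_t,\qquad g^R\doteq \beta\,dt^2+g_t .$$ Then for every geodesically convex region $\Omega\subset M$, every $x\in\Omega$ and every $\xi\in T_x\Omega$, $$\hat C(\varepsilon)\,g^R_x(\xi,\xi)\;\le\;|g^\varepsilon_x(\xi,\xi)|\;\le\;\check C(\varepsilon)\,g^R_x(\xi,\xi),$$ where $$\hat C(\varepsilon)=\Big(\tfrac{1}{\varepsilon}+\sqrt{1+\tfrac{1}{\varepsilon^2}}\Big)^{-1},\qquad \check C(\varepsilon)=\sqrt{1+\varepsilon^2}.$$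
   Context: $g^\varepsilon$ is the analytic continuation of the metric $g$ obtained by multiplying the time-time component by $(1-i\varepsilon)$; $g^R$ is the associated Riemannian metric. For $\xi\in T_x M$ one writes $\xi_0=dt(\xi)$, so $g^\varepsilon_x(\xi,\xi)=(1-i\varepsilon)\beta\xi_0^2-g_t(\xi,\xi)$. *)

(* Defs.v *)
From HB Require Import structures.
From mathcomp Require Import all_boot all_order all_algebra.
From mathcomp Require Import complex.
Set Implicit Arguments. Unset Strict Implicit. Unset Printing Implicit Defensive.
Import Order.TTheory GRing.Theory Num.Theory.
Local Open Scope ring_scope.
Local Open Scope complex_scope.

(* Pointwise data of g = beta dt^2 - g_t on M ~ R x Sigma (dim Sigma = 3).
   At a point x, a tangent vector xi in T_x M ~ R x T_p Sigma is written
   (xi0, v) with xi0 = dt(xi) and v : 'rV_3 its spatial part in a chart;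
   g_t at x is given by a symmetric positive definite 3x3 matrix G. *)

Definition quadf (R : pzRingType) (G : 'M[R]_3) (v : 'rV[R]_3) : R :=
  (v *m G *m v^T) 0 0.

Definition posdef (R : realFieldType) (G : 'M[R]_3) : Prop :=
  G^T = G /\ forall v : 'rV[R]_3, v != 0 -> 0 < quadf G v.

Definition gR (R : rcfType) (beta : R) (G : 'M[R]_3) (xi0 : R) (v : 'rV[R]_3) : R :=
  beta * xi0 ^+ 2 + quadf G v.

Definition geps (R : rcfType) (eps beta : R) (G : 'M[R]_3) (xi0 : R)
  (v : 'rV[R]_3) : R[i] :=
  (1 - 'i * eps%:C) * (beta * xi0 ^+ 2)%:C - (quadf G v)%:C.

Definition Chat (R : rcfType) (eps : R) : R :=
  (eps^-1 + Num.sqrt (1 + eps^-2))^-1.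

Definition Ccheck (R : rcfType) (eps : R) : R :=
  Num.sqrt (1 + eps ^+ 2).

(* Main.v *)
Require Import Defs.
From HB Require Import structures.
From mathcomp Require Import all_boot all_order all_algebra.
From mathcomp Require Import complex.
From mathcomp Require Import ring lra.
Import Order.TTheory GRing.Theory Num.Theory.
Local Open Scope ring_scope.
Local Open Scope complex_scope.

Lemma le_sqrt_of (R : rcfType) (x y : R) : 0 <= x -> x ^+ 2 <= y -> x <= Num.sqrt y.
Proof.
move=> hx hxy; have hy : 0 <= y by apply: le_trans hxy; rewrite exprn_ge0.
by rewrite -(ger0_norm hx) -sqrtr_sqr ler_sqrt.
Qed.

Lemma sqrt_le_of (R : rcfType) (x y : R) : 0 <= x -> y <= x ^+ 2 -> Num.sqrt y <= x.
Proof.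
move=> hx hxy; by rewrite -(ger0_norm hx) -sqrtr_sqr ler_sqrt // exprn_ge0.
Qed.

Theorem lemma1 (R : rcfType) (M : Type) (beta : M -> R) (gt : M -> 'M[R]_3)
  (hbeta : forall x, 0 < beta x) (hgt : forall x, posdef (gt x))
  (Omega : M -> Prop) (eps : R) (heps : 0 < eps)
  (x : M) (hx : Omega x) (xi0 : R) (v : 'rV[R]_3) :
  (Chat eps * gR (beta x) (gt x) xi0 v)%:C <= `|geps eps (beta x) (gt x) xi0 v|
  /\ `|geps eps (beta x) (gt x) xi0 v| <= (Ccheck eps * gR (beta x) (gt x) xi0 v)%:C.
Proof.
have ha : 0 <= beta x * xi0 ^+ 2 by rewrite mulr_ge0 ?sqr_ge0 ?ltW.
have hb : 0 <= quadf (gt x) v.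
  have [_ hq] := hgt x; have [->|hv] := eqVneq v 0; last exact: ltW (hq _ hv).
  by rewrite /quadf !mul0mx mxE.
rewrite /geps /gR /Chat /Ccheck.
move: ha hb; set a := beta x * xi0 ^+ 2; set b := quadf (gt x) v => ha hb.
have -> : (1 - 'i * eps%:C) * a%:C - b%:C = (a - b) +i* (- (eps * a)).
  apply/eqP; rewrite eq_complex /=; apply/andP; split; apply/eqP; ring.
rewrite normc_def /= !lecR.
have hu : 0 < eps^-1 by rewrite invr_gt0.
have hue : eps^-1 * eps = 1 by rewrite mulVf // gt_eqF.
have hu2 : eps ^- 2 = eps^-1 ^+ 2 by rewrite exprVn.
rewrite hu2.
move: hu hue; set u := eps^-1 => hu hue.
have hs0 : 0 <= Num.sqrt (1 + u ^+ 2) := sqrtr_ge0 _.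
have hs2 : Num.sqrt (1 + u ^+ 2) ^+ 2 = 1 + u ^+ 2.
  by rewrite sqr_sqrtr // addr_ge0 // exprn_ge0 // ltW.
have he0 : 0 <= Num.sqrt (1 + eps ^+ 2) := sqrtr_ge0 _.
have he2 : Num.sqrt (1 + eps ^+ 2) ^+ 2 = 1 + eps ^+ 2.
  by rewrite sqr_sqrtr // addr_ge0 // exprn_ge0 // ltW.
move: hs0 hs2 he0 he2.
set s := Num.sqrt (1 + u ^+ 2); set t := Num.sqrt (1 + eps ^+ 2) => hs0 hs2 he0 he2.
split.
  have hd : 0 < u + s by lra.
  apply: le_sqrt_of; first by apply: mulr_ge0; [rewrite invr_ge0; lra | lra].
  have hsu : u <= s by nra.
  set Q := (a - b) ^+ 2 + (- (eps * a)) ^+ 2.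
  have hQ : u ^+ 2 * Q = u ^+ 2 * (a - b) ^+ 2 + a ^+ 2.
    have h1 : u ^+ 2 * (eps * a) ^+ 2 = a ^+ 2.
      by rewrite exprMn mulrA -exprMn hue expr1n mul1r.
    by rewrite /Q sqrrN mulrDr h1.
  have hQ0 : 0 <= Q by rewrite /Q addr_ge0 ?sqr_ge0.
  have hd2 : 1 + 4 * u ^+ 2 <= (u + s) ^+ 2 by nra.
  have hk : u ^+ 2 * (a + b) ^+ 2 <= u ^+ 2 * ((u + s) ^+ 2 * Q).
    have hsq : u ^+ 2 * (a + b) ^+ 2 + (a + 2 * u ^+ 2 * (a - b)) ^+ 2
       = (1 + 4 * u ^+ 2) * (u ^+ 2 * Q) by rewrite hQ; ring.
    have h2 : 0 <= (a + 2 * u ^+ 2 * (a - b)) ^+ 2 := sqr_ge0 _.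
    have h3 : 0 <= u ^+ 2 * Q by rewrite mulr_ge0 ?sqr_ge0.
    have h4 : (1 + 4 * u ^+ 2) * (u ^+ 2 * Q) <= (u + s) ^+ 2 * (u ^+ 2 * Q)
      by rewrite ler_wpM2r.
    have -> : u ^+ 2 * ((u + s) ^+ 2 * Q) = (u + s) ^+ 2 * (u ^+ 2 * Q) by ring.
    lra.
  have hk' : (a + b) ^+ 2 <= (u + s) ^+ 2 * Q.
    by move: hk; rewrite ler_pM2l // exprn_gt0.
  have hc : (u + s)^-1 ^+ 2 * (u + s) ^+ 2 = 1.
    by rewrite -exprMn mulVf ?expr1n // gt_eqF.
  rewrite exprMn; apply: le_trans (ler_wpM2l (sqr_ge0 _) hk') _.
  by rewrite mulrA hc mul1r.
apply: sqrt_le_of; first by rewrite mulr_ge0 // addr_ge0.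
rewrite exprMn he2 sqrrN exprMn.
have hab : 0 <= a * b by rewrite mulr_ge0.
have hb2 : 0 <= b * (2 * a + b) by rewrite mulr_ge0 // addr_ge0 // mulr_ge0.
have e1 : (a + b) ^+ 2 = (a - b) ^+ 2 + 4 * (a * b) by ring.
have e2 : (a + b) ^+ 2 = a ^+ 2 + b * (2 * a + b) by ring.
have h1 : (a - b) ^+ 2 <= (a + b) ^+ 2 by rewrite e1; lra.
have h2 : a ^+ 2 <= (a + b) ^+ 2 by rewrite e2; lra.
have h3 : eps ^+ 2 * a ^+ 2 <= eps ^+ 2 * (a + b) ^+ 2 by rewrite ler_wpM2l ?sqr_ge0.
lra.
Qed.
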